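(* Let $I=(p_t)_{t\in[n]}$ be an instance and $\hat I=(\hat p_t)_{t\in[n]}$ a prediction such that $\min\{p_t,\hat p_t\}>0$ for some $t$. Then (Lipschitzness) $|\mathrm{opt}(I)-\mathrm{opt}(\hat I)|\le\eta(I,\hat I)$, and (monotonicity) for every $S\subseteq[n]$, letting $\hat I_S$ be the instance with $t$-th entry $p_t$ for $t\in S$ and $\hat p_t$ for $t\notin S$, we have $\eta(I,\hat I)\ge\eta(I,\hat I_S)$.
   Context: Fix a real parameter $d>0$. An instance is a finite sequence $I=(p_t)_{t\in[T]}$ of nonnegative reals; instances of different lengths are compared by padding with zeros. A solution is a finite set $X=\{x_1<\dots<x_k\}\subseteq[T]$; it is feasible for $I$ if either all $p_t=0$, or $X\ne\emptyset$ and $\max X\ge\max\{t:p_t>0\}$. With $x_0:=0$, $F(I,X)=|X|+\frac1d\sum_{i=1}^{k}\sum_{t=x_{i-1}+1}^{x_i}p_t(x_i-t)$, and $\mathrm{opt}(I)=\min\{F(I,X): X\text{ feasible}\}$. For $a\le b$, the subinstance $I\langle a,b\rangle=(p_t)_{t\in\{a,\dots,b\}}$ is an instance on time set $\{a,\dots,b\}$ (solutions are subsets of $\{a,\dots,b\}$, cost formula with $x_0:=a-1$). For an actual instance $I=(p_t)$ and a predicted instance $\hat I=(\hat p_t)$ on the same time set, $O(I,\hat I)=(\max\{p_t,\hat p_t\})_t$ and $U(I,\hat I)=(\min\{p_t,\hat p_t\})_t$. For an interval $L=\{a,\dots,b\}$, $\tau(L,I,\hat I)=\mathrm{opt}(O(I\langle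 a,b\rangle,\hat I\langle a,b\rangle))-\mathrm{opt}(U(I\langle a,b\rangle,\hat I\langle a,b\rangle))$. A partition of $[n]$ into consecutive intervals $L_1,\dots,L_m$ is non-empty for $U(I,\hat I)$ if every $L_i$ contains some $t$ with $\min\{p_t,\hat p_t\}>0$; let $\Pi(U(I,\hat I))$ be the set of such partitions. The error measure is $\eta(I,\hat I)=\max_{\mathcal P\in\Pi(U(I,\hat I))}\sum_{L\in\mathcal P}\tau(L,I,\hat I)$. *)

(* Defs.v *)
From HB Require Import structures.
From mathcomp Require Import all_boot all_order all_algebra.
Set Implicit Arguments. Unset Strict Implicit. Unset Printing Implicit Defensive.
Import Order.TTheory GRing.Theory Num.Theory.
Local Open Scope ring_scope.

Section Defs.
Variable R : realFieldType.
Variable d : R.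

(* An instance on the time set {a,...,b} is given by a function p : nat -> R;
   only the values p t for a <= t <= b matter. *)

Definition in_time_set (a b : nat) (X : {set 'I_(b.+1)}) : bool :=
  [forall x in X, a <= x]%N.

Definition feasible (a b : nat) (p : nat -> R) (X : {set 'I_(b.+1)}) : bool :=
  in_time_set a X &&
  (all (fun t => p t == 0) (index_iota a b.+1)
   || ((X != set0) &&
       [exists x in X, all (fun t => (0 < p t) ==> (t <= x)%N) (index_iota a b.+1)])).

Definition sol_seq (b : nat) (X : {set 'I_(b.+1)}) : seq nat :=
  sort leq [seq nat_of_ord x | x <- enum X].

Fixpoint wait_cost (p : nat -> R) (prev : nat) (xs : seq nat) : R :=
  match xs with
  | [::] => 0
  | x :: xs' => (\sum_(prev.+1 <= t < x.+1) p t * (x - t)%N%:R) + wait_cost p x xs'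
  end.

Definition cost (a b : nat) (p : nat -> R) (X : {set 'I_(b.+1)}) : R :=
  #|X|%:R + d^-1 * wait_cost p a.-1 (sol_seq X).

(* opt(I<a,b>): minimum of F over feasible solutions.  The solution {b} is
   always feasible (for a <= b), so seeding the min with its cost is harmless. *)
Definition opt (a b : nat) (p : nat -> R) : R :=
  \big[Order.min/cost a p [set (@ord_max b)]]_(X : {set 'I_(b.+1)} | feasible a p X)
     cost a p X.

Definition Oinst (p ph : nat -> R) : nat -> R := fun t => Order.max (p t) (ph t).
Definition Uinst (p ph : nat -> R) : nat -> R := fun t => Order.min (p t) (ph t).

Definition tau (p ph : nat -> R) (a b : nat) : R :=
  opt a b (Oinst p ph) - opt a b (Uinst p ph).

(* Partitions of [n] = {1..n} into consecutive intervals L_1,...,L_m are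
   encoded by the set C of right endpoints (c in C <-> value c+1 is a right
   endpoint); the partition is valid iff n is a right endpoint. *)
Definition cuts (n : nat) (C : {set 'I_n}) : seq nat :=
  sort leq [seq (nat_of_ord i).+1 | i <- enum C].

Fixpoint intervals (prev : nat) (cs : seq nat) : seq (nat * nat) :=
  match cs with
  | [::] => [::]
  | c :: cs' => (prev.+1, c) :: intervals c cs'
  end.

Definition partition_intervals (n : nat) (C : {set 'I_n}) : seq (nat * nat) :=
  intervals 0 (cuts C).

Definition is_partition (n : nat) (C : {set 'I_n}) : bool := n \in cuts C.

Definition nonempty_for (u : nat -> R) (n : nat) (C : {set 'I_n}) : bool :=
  all (fun L => has (fun t => 0 < u t) (index_iota L.1 L.2.+1))
      (partition_intervals C).

(* The seed tau 1 n is the value of the trivial partition {[n]}, which lies in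
   Pi(U) whenever Pi(U) is non-empty, so the max is exact in that case. *)
Definition eta_err (n : nat) (p ph : nat -> R) : R :=
  \big[Order.max/tau p ph 1 n]_(C : {set 'I_n} |
        is_partition C && nonempty_for (Uinst p ph) C)
     \sum_(L <- partition_intervals C) tau p ph L.1 L.2.

End Defs.

(* Main.v *)
Require Import Defs.
From HB Require Import structures.
From mathcomp Require Import all_boot all_order all_algebra.
From mathcomp Require Import zify ring lra.
Import Order.TTheory GRing.Theory Num.Theory.
Local Open Scope ring_scope.

Ltac prune := repeat match goal with
  | H : ?T |- _ => lazymatch T with
      | is_true (leq _ _) => fail
      | is_true (andb (leq _ _) (leq _ _)) => fail
      | @eq nat _ _ => fail
      | _ => lazymatch type of T with Prop => clear H | _ => fail end
      end
  end.
Ltac slia := prune; lia.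

Lemma sort_set_gen (m : nat) (g : nat -> nat) (s : seq nat) :
  injective g -> sorted ltn s -> (forall x, x \in s -> exists j, (j < m)%N /\ g j = x) ->
  sort leq [seq g (nat_of_ord i) | i <- enum [set i : 'I_m | g (nat_of_ord i) \in s]] = s.
Proof.
move=> ginj ss hs.
apply: (irr_sorted_eq ltn_trans ltnn).
- by rewrite ltn_sorted_uniq_leq sort_uniq sort_sorted ?andbT;
    [rewrite map_inj_uniq ?enum_uniq // => i j /ginj /val_inj | exact: leq_total].
- exact: ss.
move=> x; rewrite mem_sort; apply/mapP/idP.
- by case=> i; rewrite mem_enum inE => hi ->.
- move=> xs; have [j [jm gj]] := hs x xs.
  exists (Ordinal jm); last by rewrite gj.
  by rewrite mem_enum inE /= gj.
Qed.



Section S.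
Variable R : realFieldType.
Variable d : R.
Hypothesis d_gt0 : 0 < d.

Definition covL (q : nat -> R) a b (xs : seq nat) : bool :=
  all (fun t => q t == 0) (index_iota a b.+1) ||
  has (fun x => all (fun t => (0 < q t) ==> (t <= x)%N) (index_iota a b.+1)) xs.

Definition good q a b xs : bool :=
  [&& path ltn a.-1 xs, all (fun x => x <= b)%N xs & covL q a b xs].

Definition costL q prev xs : R := (size xs)%:R + d^-1 * wait_cost q prev xs.

Lemma path_lt p xs x : path ltn p xs -> x \in xs -> (p < x)%N.
Proof. by rewrite path_sortedE; [case/andP=> /allP h _ /h | exact: ltn_trans]. Qed.
Arguments path_lt {p xs x}.

Lemma sol_seq_set b xs : sorted ltn xs -> all (fun x => x <= b)%N xs ->
  sol_seq [set i : 'I_b.+1 | nat_of_ord i \in xs] = xs.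
Proof.
move=> ss ab; rewrite /sol_seq.
apply: (@sort_set_gen b.+1 id xs) => // x xin.
by exists x; split=> //; rewrite ltnS; apply: (allP ab).
Qed.

Lemma cost_costL a b q (X : {set 'I_b.+1}) : cost d a q X = costL q a.-1 (sol_seq X).
Proof. by rewrite /cost /costL /sol_seq size_sort size_map -cardE. Qed.

Lemma opt_le a b q xs : (0 < a)%N -> good q a b xs -> opt d a b q <= costL q a.-1 xs.
Proof.
move=> a0 /and3P[pa ab cv].
have ss : sorted ltn xs by apply: path_sorted pa.
set X := [set i : 'I_b.+1 | nat_of_ord i \in xs].
have fX : feasible a q X.
  apply/andP; split.
    apply/forallP=> x; apply/implyP; rewrite inE => xin.
    by have := path_lt pa xin; slia.
  case/orP: cv => [-> //|/hasP[x xin hx]]; apply/orP; right.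
  have xb : (x < b.+1)%N by rewrite ltnS; apply: (allP ab).
  have xX : Ordinal xb \in X by rewrite inE.
  apply/andP; split; first by apply/set0Pn; exists (Ordinal xb).
  by apply/existsP; exists (Ordinal xb); rewrite xX.
rewrite /opt; apply: le_trans (bigmin_le_cond _ _ fX) _.
by rewrite cost_costL sol_seq_set.
Qed.

Lemma good_sol a b q (X : {set 'I_b.+1}) : (0 < a)%N -> feasible a q X -> good q a b (sol_seq X).
Proof.
move=> a0 /andP[/forallP tX fX].
have memS x : (x \in sol_seq X) = [exists i in X, nat_of_ord i == x].
  rewrite /sol_seq mem_sort; apply/mapP/existsP.
    by case=> i; rewrite mem_enum => iX ->; exists i; rewrite iX eqxx.
  by case=> i /andP[iX /eqP <-]; exists i; rewrite ?mem_enum.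
apply/and3P; split.
- rewrite path_sortedE; last exact: ltn_trans.
  apply/andP; split.
    apply/allP=> x; rewrite memS => /existsP[i /andP[iX /eqP <-]].
    by have := implyP (tX i) iX; slia.
  rewrite /sol_seq ltn_sorted_uniq_leq sort_uniq sort_sorted ?andbT; last exact: leq_total.
  by rewrite map_inj_uniq ?enum_uniq //; apply: val_inj.
- apply/allP=> x; rewrite memS => /existsP[i /andP[iX /eqP <-]].
  by rewrite -ltnS.
- rewrite /covL; case/orP: fX => [-> //|/andP[_ /existsP[i /andP[iX hi]]]].
  apply/orP; right; apply/hasP; exists (nat_of_ord i) => //.
  by rewrite memS; apply/existsP; exists i; rewrite iX eqxx.
Qed.

Lemma sol_seq1 b : sol_seq [set (@ord_max b)] = [:: b].
Proof. by rewrite /sol_seq enum_set1. Qed.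

Lemma opt_att a b q : (0 < a)%N -> (a <= b)%N ->
  exists xs, good q a b xs /\ opt d a b q = costL q a.-1 xs.
Proof.
move=> a0 ab; rewrite /opt.
apply: (big_ind (fun v => exists xs, good q a b xs /\ v = costL q a.-1 xs)).
- exists [:: b]; rewrite cost_costL sol_seq1; split=> //.
  apply/and3P; split; first by rewrite /= andbT; slia.
    by rewrite /= leqnn.
  apply/orP; right; rewrite /= orbF; apply/allP=> t.
  by rewrite mem_index_iota => /andP[_ tb]; apply/implyP; rewrite -ltnS.
- move=> x y hx hy; rewrite minEle; by case: ifP.
- by move=> X fX; exists (sol_seq X); rewrite cost_costL; split=> //; apply: good_sol.
Qed.
Arguments opt_att {a b q}.
Arguments opt_le {a b q xs}.


Lemma wait_mono (q1 q2 : nat -> R) b xs prev :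
  (forall t, (prev < t <= b)%N -> q1 t <= q2 t) ->
  all (fun x => x <= b)%N xs -> path ltn prev xs ->
  wait_cost q1 prev xs <= wait_cost q2 prev xs.
Proof.
elim: xs prev => [//|x xs IH] prev h /= /andP[xb ab] /andP[px pxs].
apply: lerD; last first.
  by apply: IH => // t /andP[xt tb]; apply: h; rewrite tb andbT; slia.
apply: ler_sum_nat => t /andP[pt tx]; apply: ler_wpM2r; first exact: ler0n.
by apply: h; apply/andP; split; slia.
Qed.

Lemma wait0 xs prev : wait_cost (fun _ => 0 : R) prev xs = 0.
Proof.
elim: xs prev => [//|x xs IH] prev /=; rewrite IH addr0.
by rewrite big1 // => t _; rewrite mul0r.
Qed.

Lemma wait_ge0 (q : nat -> R) b xs prev :
  (forall t, (prev < t <= b)%N -> 0 <= q t) ->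
  all (fun x => x <= b)%N xs -> path ltn prev xs -> 0 <= wait_cost q prev xs.
Proof.
move=> h ab pa; rewrite -(wait0 xs prev).
by apply: (@wait_mono (fun _ => 0) q b xs prev h ab pa).
Qed.

Definition nn (q : nat -> R) a b := forall t, (a <= t <= b)%N -> 0 <= q t.
Definition pos (q : nat -> R) a b := has (fun t => 0 < q t) (index_iota a b.+1).

Lemma posP q a b : reflect (exists t, (a <= t <= b)%N /\ 0 < q t) (pos q a b).
Proof.
apply: (iffP hasP).
  by case=> t; rewrite mem_index_iota ltnS => ht qt; exists t.
by case=> t [ht qt]; exists t; rewrite ?mem_index_iota ?ltnS.
Qed.

Lemma covLP q a b xs : nn q a b -> reflect
  ((exists t, (a <= t <= b)%N /\ 0 < q t) ->
   exists2 x, x \in xs & forall t, (a <= t <= b)%N -> 0 < q t -> (t <= x)%N)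
  (covL q a b xs).
Proof.
move=> hn; apply: (iffP orP).
- case=> [/allP hz [t [ht qt]]|/hasP[x xin /allP hx] _].
    by have := hz t; rewrite mem_index_iota ltnS ht (gt_eqF qt) => /(_ isT).
  by exists x => // t ht qt; have := hx t; rewrite mem_index_iota ltnS ht qt => /(_ isT).
- move=> h; case: (posP q a b) => [/h [x xin hx]|np].
    right; apply/hasP; exists x => //; apply/allP => t.
    by rewrite mem_index_iota ltnS => ht; apply/implyP; apply: hx.
  left; apply/allP => t; rewrite mem_index_iota ltnS => ht.
  have := hn t ht; rewrite le_eqVlt => /orP[/eqP <- //|qt].
  by case: np; exists t.
Qed.
Arguments covLP {q a b xs}.

Lemma last_ge p xs x : path ltn p xs -> x \in p :: xs -> (x <= last p xs)%N.
Proof.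
elim: xs p x => [|y ys IH] p x /=; first by rewrite inE => _ /eqP ->.
case/andP=> py pys; rewrite inE => /orP[/eqP ->|xin].
  by have := IH y y pys (mem_head _ _); slia.
exact: IH.
Qed.

Arguments last_ge {p xs x}.

Lemma last_le p xs b : (p <= b)%N -> all (fun x => x <= b)%N xs -> (last p xs <= b)%N.
Proof.
move=> pb ab; have := mem_last p xs; rewrite inE => /orP[/eqP -> //|].
by move/(allP ab).
Qed.

Lemma opt_mono a b q1 q2 : (0 < a)%N -> (a <= b)%N ->
  (forall t, (a <= t <= b)%N -> 0 <= q1 t /\ q1 t <= q2 t) ->
  opt d a b q1 <= opt d a b q2.
Proof.
move=> a0 ab h.
have hn1 : nn q1 a b by move=> t /h [].
have hn2 : nn q2 a b by move=> t /h [x y]; apply: le_trans y.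
have [xs [/and3P[pa axs cv] ->]] := opt_att (q:=q2) a0 ab.
apply: (le_trans (opt_le (q:=q1) (xs:=xs) a0 _)).
  apply/and3P; split=> //; apply/(covLP hn1) => [[t [ht qt]]].
  have [|x xin hx] := (covLP hn2 cv).
    by exists t; split=> //; have [_ ?] := h t ht; apply: lt_le_trans qt _.
  exists x => // t' ht' qt'; apply: hx => //.
  by have [_ ?] := h t' ht'; apply: lt_le_trans qt' _.
rewrite /costL lerD2l; apply: ler_wpM2l; first by rewrite invr_ge0 ltW.
apply: (@wait_mono q1 q2 b xs a.-1 _ axs pa) => t ht; have [] // := h t; apply/andP; split; slia.
Qed.

Lemma opt_ge1 a b q : (0 < a)%N -> (a <= b)%N -> nn q a b -> pos q a b -> 1 <= opt d a b q.
Proof.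
move=> a0 ab hn hp.
have [xs [/and3P[pa axs cv] ->]] := opt_att (q:=q) a0 ab.
have [|x xin _] := covLP hn cv; first exact/posP.
rewrite /costL.
have h1 : 1 <= (size xs)%:R :> R.
  by case: xs xin {pa axs cv} => // y ys _; rewrite ler1n.
have h2 : 0 <= d^-1 * wait_cost q a.-1 xs.
  apply: mulr_ge0; first by rewrite invr_ge0 ltW.
  apply: (@wait_ge0 q b xs a.-1 _ axs pa) => t ht; apply: hn; slia.
by apply: le_trans h1 _; rewrite lerDl.
Qed.

Lemma opt_le0 a b q : (0 < a)%N -> nn q a b -> ~~ pos q a b -> opt d a b q <= 0.
Proof.
move=> a0 hn hp; apply: (le_trans (opt_le (q:=q) (b:=b) (xs := [::]) a0 _)); last first.
  by rewrite /costL /= mulr0 addr0.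
apply/and3P; split=> //; apply/covLP => // -[t [ht qt]].
by case/posP: hp; exists t.
Qed.

Lemma wait_cat (q : nat -> R) p s1 s2 :
  wait_cost q p (s1 ++ s2) = wait_cost q p s1 + wait_cost q (last p s1) s2.
Proof. by elim: s1 p => [|x s1 IH] p /=; rewrite ?add0r // IH addrA. Qed.

Lemma wait_shift (q : nat -> R) p1 p2 xs : (p1 <= p2)%N ->
  (forall t, (p1 < t <= p2)%N -> q t = 0) -> path ltn p2 xs ->
  wait_cost q p1 xs = wait_cost q p2 xs.
Proof.
case: xs => [//|x xs] /= p12 hz /andP[px _]; congr (_ + _).
rewrite (big_cat_nat _ (n := p2.+1)) //=; try slia.
rewrite big_nat big1 ?add0r // => t ht; rewrite hz ?mul0r //; slia.
Qed.


Lemma nn_sub q a b a' b' : nn q a b -> (a <= a')%N -> (b' <= b)%N -> nn q a' b'.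
Proof. by move=> h h1 h2 t ht; apply: h; slia. Qed.
Arguments nn_sub {q a b a' b'}.

Lemma opt_sub a b c q : (0 < a)%N -> (a <= b)%N -> (b < c)%N -> nn q a c ->
  opt d a c q <= opt d a b q + opt d b.+1 c q.
Proof.
move=> a0 ab bc hn.
have hnab : nn q a b := nn_sub hn (leqnn a) (ltnW bc).
have hnbc : nn q b.+1 c := nn_sub hn (leq_trans ab (leqnSn b)) (leqnn c).
have [xs1 [/and3P[p1 a1 c1] ->]] := opt_att (q:=q) a0 ab.
have [xs2 [/and3P[p2 a2 c2] ->]] := opt_att (q:=q) (ltn0Sn b) bc.
rewrite /= in p2 *.
set L := last a.-1 xs1.
have Lb : (L <= b)%N by apply: last_le _ a1; slia.
have aL : (a.-1 <= L)%N by apply: last_ge p1 (mem_head _ _).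
have hz : forall t, (L < t <= b)%N -> q t = 0.
  move=> t ht; have := hnab t ltac:(slia); rewrite le_eqVlt => /orP[/eqP <- //|qt].
  have [|x xin hx] := covLP hnab c1; first by exists t; split=> //; slia.
  have := hx t ltac:(slia) qt; have := @last_ge _ _ x p1; rewrite inE xin orbT.
  move=> /(_ isT); rewrite -/L; slia.
apply: le_trans (opt_le (q:=q) (b:=c) (xs := xs1 ++ xs2) a0 _) _.
  apply/and3P; split.
  - rewrite cat_path p1 /= -/L.
    by case: xs2 p2 {a2 c2} => //= y ys /andP[bly ->]; rewrite andbT; slia.
  - rewrite all_cat a2 andbT; apply/allP => x /(allP a1); slia.
  - apply/(covLP hn) => -[t [ht qt]].
    case: (posP q b.+1 c) => [hp2|np2].
      have [x xin hx] := covLP hnbc c2 hp2.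
      have bx := path_lt p2 xin.
      exists x; first by rewrite mem_cat xin orbT.
      move=> t' ht' qt'; case: (leqP t' b) => tb; first slia.
      by apply: hx => //; slia.
    have tb : (t <= b)%N.
      by case: (leqP t b) => // tb; case: np2; exists t; split=> //; slia.
    have [|x xin hx] := covLP hnab c1; first by exists t; split=> //; slia.
    exists x; first by rewrite mem_cat xin.
    move=> t' ht' qt'; case: (leqP t' b) => tb'; first by apply: hx => //; slia.
    by case: np2; exists t'; split=> //; slia.
rewrite /costL size_cat natrD wait_cat -/L (@wait_shift q L b xs2) //.
by rewrite mulrDr addrACA.
Qed.

Lemma split_lem (q : nat -> R) b c xs p : (b <= c)%N -> (p < b)%N -> path ltn p xs ->
  all (fun x => x <= c)%N xs ->
  (forall t, (p < t <= b)%N -> 0 < q t -> exists2 x, x \in xs & (t <= x)%N) ->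
  (forall t, (p < t <= c)%N -> 0 <= q t) ->
  exists ys1 ys2, [/\ path ltn p ys1, all (fun x => x <= b)%N ys1, b \in ys1,
    path ltn b ys2 & all (fun x => x <= c)%N ys2] /\ [/\
    (forall x, x \in xs -> (b < x)%N -> x \in ys2),
    (size ys1 + size ys2 <= (size xs).+1)%N &
    wait_cost q p ys1 + wait_cost q b ys2 <= wait_cost q p xs].
Proof.
move=> bc; elim: xs p => [|x xs IH] p pb.
  move=> _ _ hc hn; exists [:: b], [::]; do 2!split=> //=; rewrite ?andbT ?leqnn ?inE //.
  rewrite !addr0 big_nat big1 // => t ht.
  have := hn t ltac:(slia); rewrite le_eqVlt => /orP[/eqP <-|qt]; first by rewrite mul0r.
  by have [y] := hc t ltac:(slia) qt.
move=> /= /andP[px pxs] /andP[xc axs] hc hn.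
case: (ltngtP x b) => hxb.
- have [||ys1 [ys2 [[h1 h2 h3 h4 h5] [h6 h7 h8]]]] := IH x hxb pxs axs.
  + move=> t ht qt; have [y] := hc t ltac:(slia) qt.
    rewrite inE => /orP[/eqP -> | yin] ty; first slia.
    by exists y.
  + by move=> t ht; apply: hn; slia.
  exists (x :: ys1), ys2; do 2!split=> //=.
  + by rewrite px h1.
  + by rewrite h2 andbT ltnW.
  + by rewrite inE h3 orbT.
  + move=> y; rewrite inE => /orP[/eqP -> | yin] bly; first slia.
    exact: h6.
  + by rewrite -addrA lerD2l.
- exists [:: b], (x :: xs); do 2!split=> //=; rewrite ?andbT ?leqnn ?inE ?px ?xc ?axs ?pxs //.
  + slia.
  + rewrite addr0 addrA lerD2r [X in _ <= X](big_cat_nat _ (n := b.+1)) /=; try slia.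
    rewrite lerD2r; apply: ler_sum_nat => t ht; apply: ler_wpM2l.
      by apply: hn; slia.
    by rewrite ler_nat; apply: leq_sub2r; slia.
- subst x; exists [:: b], xs; do 2!split=> //=; rewrite ?andbT ?leqnn ?inE ?px ?xc ?axs ?pxs //.
  + move=> y; rewrite inE => /orP[/eqP -> | yin] bly //; slia.
  + by rewrite addr0.
Qed.

Lemma opt_sup a b c q : (0 < a)%N -> (a <= b)%N -> (b < c)%N -> nn q a c ->
  opt d a b q + opt d b.+1 c q <= opt d a c q + 1.
Proof.
move=> a0 ab bc hn.
have hnbc : nn q b.+1 c := nn_sub hn (leq_trans ab (leqnSn b)) (leqnn c).
have [xs [/and3P[pa ac cv] ->]] := opt_att (q:=q) a0 (ltnW (leq_ltn_trans ab bc)).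
have [||ys1 [ys2 [[py1 ay1 by1 py2 ay2] [mem2 sz wt]]]] :=
  @split_lem q b c xs a.-1 (ltnW bc) ltac:(slia) pa ac.
- move=> t ht qt; have [|x xin hx] := covLP hn cv; first by exists t; split=> //; slia.
  by exists x => //; apply: hx => //; slia.
- by move=> t ht; apply: hn; slia.
have g1 : good q a b ys1.
  apply/and3P; split=> //; apply/(covLP (nn_sub hn (leqnn a) (ltnW bc))) => _.
  by exists b => // t /andP[].
have g2 : good q b.+1 c ys2.
  apply/and3P; split=> //; apply/(covLP hnbc) => -[t [ht qt]].
  have [|x xin hx] := covLP hn cv; first by exists t; split=> //; slia.
  have tx := hx t ltac:(slia) qt.
  exists x; first by apply: mem2 => //; slia.
  by move=> t' ht' qt'; apply: hx => //; slia.
apply: le_trans (lerD (opt_le a0 g1) (opt_le (ltn0Sn b) g2)) _.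
rewrite /costL /=.
have hs : (size ys1)%:R + (size ys2)%:R <= (size xs)%:R + 1 :> R.
  by rewrite -natrD natr1 ler_nat.
have hw : d^-1 * wait_cost q a.-1 ys1 + d^-1 * wait_cost q b ys2 <= d^-1 * wait_cost q a.-1 xs.
  by rewrite -mulrDr ler_wpM2l // invr_ge0 ltW.
lra.
Qed.

End S.
Arguments path_lt {p xs x}.
Arguments last_ge {p xs x}.
Arguments last_le {p xs b}.



Section Merge.
Variable R : realFieldType.
Variable n : nat.
Variables (T Psi Tau : nat -> nat -> R) (e e' : nat -> nat -> bool).
Hypothesis hE' : forall a b, e' a b -> (a <= b)%N.
Hypothesis hEm : forall a b a' b', (a' <= a)%N -> (b <= b')%N -> e a b -> e a' b'.
Hypothesis h1 : forall a b, (1 <= a)%N -> (a <= b)%N -> (b <= n)%N -> T a b <= Psi a b.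
Hypothesis h2 : forall a b, (1 <= a)%N -> (a <= b)%N -> (b <= n)%N -> e' a b -> ~~ e a b ->
  T a b <= Psi a b - 1.
Hypothesis h3 : forall a b c, (1 <= a)%N -> (a <= b)%N -> (b < c)%N -> (c <= n)%N ->
  Psi a b + Psi b.+1 c <= Psi a c + 1.
Hypothesis h4 : forall a b, (1 <= a)%N -> (a <= b)%N -> (b <= n)%N -> Psi a b <= Tau a b.

Lemma merge_blocks cs : forall a prev (st : bool) X, (1 <= a)%N -> (a <= prev)%N -> (prev <= n)%N ->
  X <= Psi a prev - (if st then 0 else 1) -> (st -> e a prev) -> e a n ->
  all (fun L => e' L.1 L.2) (intervals prev cs) -> all (fun c => c <= n)%N cs ->
  last prev cs = n ->
  exists cs', [/\ path ltn a.-1 cs', all (fun c => c <= n)%N cs', last a.-1 cs' = n,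
    all (fun L => e L.1 L.2) (intervals a.-1 cs') &
    X + \sum_(L <- intervals prev cs) T L.1 L.2 <= \sum_(L <- intervals a.-1 cs') Tau L.1 L.2].
Proof.
elim: cs => [|c cs IH] a prev st X a1 ap pn hX hst hen /=.
  move=> _ _ pe; subst prev; exists [:: n]; split=> //=.
  - by rewrite andbT; slia.
  - by rewrite leqnn.
  - by rewrite prednK // hen.
  rewrite big_nil big_cons big_nil !addr0 prednK //.
  apply: le_trans (h4 _ _ a1 ap (leqnn n)); case: st hX {hst} => hX; lra.
case/andP=> he' hall /andP[cn alln] hlast.
have pc : (prev < c)%N := hE' _ _ he'.
case: (boolP (e prev.+1 c)) => hec.
- case: st hX hst => hX hst.
  + have [|||cs' [p' a' l' e2 s']] := IH prev.+1 c true (T prev.+1 c) (ltn0Sn _) pc cn _ _ _ hall alln hlast.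
    * by rewrite subr0; apply: h1.
    * by [].
    * by apply: hEm hec => //.
    exists (prev :: cs'); split=> //=.
    - by rewrite p' andbT; slia.
    - by rewrite pn.
    - by rewrite prednK // hst // e2.
    rewrite big_cons addrA /= prednK // big_cons /= -addrA.
    apply: lerD; first by apply: le_trans (h4 _ _ a1 ap pn); lra.
    exact: s'.
  + have [|||cs' [p' a' l' e2 s']] := IH a c true (X + T prev.+1 c) a1 (ltnW (leq_ltn_trans ap pc)) cn _ _ _ hall alln hlast.
    * rewrite subr0; have := h3 _ _ _ a1 ap pc cn; have := h1 _ _ (ltn0Sn _) pc cn; lra.
    * by move=> _; apply: hEm hec => //; slia.
    * by [].
    exists cs'; split=> //; by rewrite big_cons addrA.
- have [|||cs' [p' a' l' e2 s']] := IH a c st (X + T prev.+1 c) a1 (ltnW (leq_ltn_trans ap pc)) cn _ _ _ hall alln hlast.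
  + have := h3 _ _ _ a1 ap pc cn; have := h2 _ _ (ltn0Sn _) pc cn he' hec; case: st hX {hst} => hX; lra.
  + by move=> /hst; apply: hEm => //; slia.
  + by [].
  exists cs'; split=> //; by rewrite big_cons addrA.
Qed.

End Merge.



Lemma cuts_facts n (C : {set 'I_n}) :
  path ltn 0 (cuts C) /\ all (fun c => c <= n)%N (cuts C).
Proof.
have memC x : x \in cuts C -> exists i : 'I_n, x = (nat_of_ord i).+1.
  by rewrite /cuts mem_sort => /mapP[i _ ->]; exists i.
split.
  rewrite path_sortedE; last exact: ltn_trans.
  apply/andP; split.
    by apply/allP => x /memC [i ->].
  rewrite /cuts ltn_sorted_uniq_leq sort_uniq sort_sorted ?andbT; last exact: leq_total.
  by rewrite map_inj_uniq ?enum_uniq // => i j [] /val_inj.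
by apply/allP => x /memC [i ->]; apply: ltn_ord.
Qed.

Lemma cuts_set n cs : path ltn 0 cs -> all (fun c => c <= n)%N cs ->
  cuts [set i : 'I_n | (nat_of_ord i).+1 \in cs] = cs.
Proof.
move=> pc ac; rewrite /cuts.
apply: (@sort_set_gen n succn cs); first by move=> x y [].
  exact: path_sorted pc.
move=> x xin; have := path_lt pc xin; have := allP ac x xin => xn x0.
by exists x.-1; split; slia.
Qed.

Lemma last_eq_n p cs n : path ltn p cs -> all (fun c => c <= n)%N cs -> (p <= n)%N ->
  n \in cs -> last p cs = n.
Proof.
move=> pc ac pn nin; apply/eqP; rewrite eqn_leq last_le //=.
by apply: last_ge pc _; rewrite inE nin orbT.
Qed.



Theorem mainTheorem4 (R : realFieldType) (d : R) (n : nat) (p ph : nat -> R) :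
  0 < d ->
  (forall t : nat, (1 <= t <= n)%N -> 0 <= p t) ->
  (forall t : nat, (1 <= t <= n)%N -> 0 <= ph t) ->
  (exists t : nat, (1 <= t <= n)%N /\ 0 < Order.min (p t) (ph t)) ->
  `|opt d 1 n p - opt d 1 n ph| <= eta_err d n p ph /\
  (forall S : nat -> bool,
     eta_err d n p (fun t => if S t then p t else ph t) <= eta_err d n p ph).
Proof.
move=> d0 hp hph [t0 [ht0 ut0]].
have n1 : (1 <= n)%N by slia.
have hU : forall t, (1 <= t <= n)%N -> 0 <= Uinst p ph t.
  by move=> t ht; rewrite /Uinst le_min hp ?hph.
have hO : forall t, (1 <= t <= n)%N -> 0 <= Oinst p ph t.
  by move=> t ht; rewrite /Oinst le_max hp.
have nnU : forall a b, (1 <= a)%N -> (b <= n)%N -> nn R (Uinst p ph) a b.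
  by move=> a b a1 bn t ht; apply: hU; slia.
have etau : tau d p ph 1 n <= eta_err d n p ph by apply: bigmax_ge_id.
split.
  have m1 : opt d 1 n (Uinst p ph) <= opt d 1 n p.
    apply: opt_mono => // t ht; split; first exact: hU.
    by rewrite /Uinst ge_min lexx.
  have m2 : opt d 1 n p <= opt d 1 n (Oinst p ph).
    apply: opt_mono => // t ht; split; first exact: hp.
    by rewrite /Oinst le_max lexx.
  have m3 : opt d 1 n (Uinst p ph) <= opt d 1 n ph.
    apply: opt_mono => // t ht; split; first exact: hU.
    by rewrite /Uinst ge_min lexx orbT.
  have m4 : opt d 1 n ph <= opt d 1 n (Oinst p ph).
    apply: opt_mono => // t ht; split; first exact: hph.
    by rewrite /Oinst le_max lexx orbT.
  move: etau; rewrite /tau ler_norml => etau; apply/andP; split; lra.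
move=> S.
set phs := fun t => if S t then p t else ph t.
have fUU : forall t, (1 <= t <= n)%N -> 0 <= Uinst p ph t /\ Uinst p ph t <= Uinst p phs t.
  move=> t ht; split; first exact: hU.
  rewrite /Uinst /phs; case: (S t); last exact: lexx.
  by rewrite le_min ge_min lexx /=.
have fU'0 : forall t, (1 <= t <= n)%N -> 0 <= Uinst p phs t.
  by move=> t ht; have [a b] := fUU t ht; apply: le_trans b.
have fOO : forall t, (1 <= t <= n)%N -> 0 <= Oinst p phs t /\ Oinst p phs t <= Oinst p ph t.
  move=> t ht; split.
    by rewrite /Oinst le_max hp.
  rewrite /Oinst /phs; case: (S t); last exact: lexx.
  by rewrite ge_max le_max lexx.
pose T a b := tau d p phs a b.
pose Psi a b := opt d a b (Oinst p phs) - opt d a b (Uinst p ph).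
pose e := pos R (Uinst p ph).
pose e' := pos R (Uinst p phs).
have hE' : forall a b, e' a b -> (a <= b)%N.
  by move=> a b /posP [t [ht _]]; slia.
have hEm : forall a b a' b', (a' <= a)%N -> (b <= b')%N -> e a b -> e a' b'.
  move=> a b a' b' h1 h2 /posP [t [ht ut]]; apply/posP; exists t; split=> //; slia.
have h1 : forall a b, (1 <= a)%N -> (a <= b)%N -> (b <= n)%N -> T a b <= Psi a b.
  move=> a b a1 ab bn; rewrite /T /Psi /tau.
  have : opt d a b (Uinst p ph) <= opt d a b (Uinst p phs).
    by apply: opt_mono => // t ht; apply: fUU; slia.
  lra.
have h2 : forall a b, (1 <= a)%N -> (a <= b)%N -> (b <= n)%N -> e' a b -> ~~ e a b ->
    T a b <= Psi a b - 1.
  move=> a b a1 ab bn he' he; rewrite /T /Psi /tau.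
  have : 1 <= opt d a b (Uinst p phs).
    by apply: opt_ge1 => // t ht; apply: fU'0; slia.
  have := @opt_le0 R d a b (Uinst p ph) a1 (nnU a b a1 bn) he.
  lra.
have h3 : forall a b c, (1 <= a)%N -> (a <= b)%N -> (b < c)%N -> (c <= n)%N ->
    Psi a b + Psi b.+1 c <= Psi a c + 1.
  move=> a b c a1 ab bc cn; rewrite /Psi.
  have : opt d a b (Oinst p phs) + opt d b.+1 c (Oinst p phs) <= opt d a c (Oinst p phs) + 1.
    by apply: opt_sup => // t ht; have [] := fOO t ltac:(slia).
  have := @opt_sub R d a b c (Uinst p ph) a1 ab bc (nnU a c a1 cn).
  lra.
have h4 : forall a b, (1 <= a)%N -> (a <= b)%N -> (b <= n)%N -> Psi a b <= tau d p ph a b.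
  move=> a b a1 ab bn; rewrite /Psi /tau.
  have : opt d a b (Oinst p phs) <= opt d a b (Oinst p ph).
    by apply: opt_mono => // t ht; apply: fOO; slia.
  lra.
rewrite {1}/eta_err; apply: bigmax_le.
  by apply: le_trans etau; apply: le_trans (h1 _ _ (leqnn 1) n1 (leqnn n)) _; apply: h4.
move=> C /andP[hpC hneC].
have [pc ac] := cuts_facts n C.
have ln := @last_eq_n 0%N (cuts C) n pc ac (leq0n n) hpC.
move: hpC hneC pc ac ln; rewrite /is_partition /nonempty_for /partition_intervals.
case: (cuts C) => [//|c1 rest] _ /= /andP[he1 hall] /andP[c10 prest] /andP[c1n arest] ln.
have [||||||cs' [p' a' l' e2 s']] := @merge_blocks R n T Psi (tau d p ph) e e' hE' hEm h1 h2 h3 h4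
   rest 1 c1 (e 1 c1) (T 1 c1) (leqnn 1) c10 c1n.
- case: (boolP (e 1 c1)) => hst; first by rewrite subr0; apply: h1.
  exact: h2.
- by [].
- by apply/posP; exists t0.
- exact: hall.
- exact: arest.
- exact: ln.
rewrite big_cons; apply: le_trans s' _.
set C' := [set i : 'I_n | (nat_of_ord i).+1 \in cs'].
have cC : cuts C' = cs' by apply: cuts_set.
have -> : \sum_(L <- intervals 1.-1 cs') tau d p ph L.1 L.2 =
          \sum_(L <- partition_intervals C') tau d p ph L.1 L.2.
  by rewrite /partition_intervals cC.
apply: le_bigmax_cond; apply/andP; split.
  rewrite /is_partition cC; have := mem_last 0 cs'; rewrite l' inE => /orP[/eqP n0|//].
  by move: n1; rewrite n0.
by rewrite /nonempty_for /partition_intervals cC.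
Qed.
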